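(* Let $k\ge2$, $n\ge1$ be integers, let $\bar{\mathcal{P}}\in\mathbb{R}^{[k,n]}$ be a columnwise-substochastic tensor, $\mathbf{v}\in\mathbb{R}^n$ a stochastic vector and $\alpha\in[0,1)$ with $\varsigma:=(2k-3)\alpha(1-\alpha)^{-\frac{k-2}{k-1}}<1$. Choose $\mathbf{y}_0\in\mathbb{R}^n_+$ with $\mathbf{e}^T\mathbf{y}_0\le(1-\alpha)^{-\frac{1}{k-1}}$ and define iteratively, for $c=0,1,2,\dots$, $\mathbf{z}_c:=\alpha\bar{\mathcal{P}}\mathbf{y}_c^{k-1}+\mathbf{v}$ and $\mathbf{y}_{c+1}:=(\mathbf{e}^T\mathbf{z}_c)^{-\frac{k-2}{k-1}}\mathbf{z}_c$ (the tensor splitting algorithm). Then the sequence $\{\mathbf{y}_c\}$ converges globally to a nonnegative solution $\mathbf{y}_*$ of the MLPPR system $(\mathbf{e}^T\mathbf{y})^{k-2}\mathbf{y}-\alpha\bar{\mathcal{P}}\mathbf{y}^{k-1}=\mathbf{v}$ with a linear rate, namely $$\|\mathbf{y}_c-\mathbf{y}_*\|_1\le\varsigma^c\|\mathbf{y}_0-\mathbf{y}_*\|_1\quad\text{for all }c\ge0.$$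
   Context: For $\mathcal{P}\in\mathbb{R}^{[k,n]}$ (real tensors of order $k$, dimension $n$) and $\mathbf{y}\in\mathbb{R}^n$, $(\mathcal{P}\mathbf{y}^{k-1})_i=\sum_{i_2,\dots,i_k}p_{i i_2\dots i_k}y_{i_2}\cdots y_{i_k}$. $\bar{\mathcal{P}}$ is columnwise-substochastic if its entries are nonnegative and $\sum_{i}\bar p_{i i_2\dots i_k}\le1$ for all $i_2,\dots,i_k$. $\mathbf{e}$ is the all-ones vector; a stochastic vector is nonnegative with entries summing to $1$. The MLPPR system $(I\circ\mathbf{e}^{\circ(k-2)}-\alpha\bar{\mathcal{P}})\mathbf{y}^{k-1}=\mathbf{v}$ is exactly $(\mathbf{e}^T\mathbf{y})^{k-2}\mathbf{y}-\alpha\bar{\mathcal{P}}\mathbf{y}^{k-1}=\mathbf{v}$. *)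

(* Defs.v *)
From HB Require Import structures.
From mathcomp Require Import all_boot all_order all_algebra.
From mathcomp Require Import all_classical all_reals all_analysis.
Set Implicit Arguments. Unset Strict Implicit. Unset Printing Implicit Defensive.
Import Order.TTheory GRing.Theory Num.Theory.
Local Open Scope ring_scope.

(* A real tensor of order k and dimension n: entries p_{i i_2 ... i_k},
   the multi-index (i_2,...,i_k) being a function 'I_(k-1) -> 'I_n. *)
Definition tensor (R : realType) (k n : nat) := 'I_n -> {ffun 'I_(k.-1) -> 'I_n} -> R.

Definition tapply (R : realType) (k n : nat) (P : tensor R k n) (y : 'I_n -> R) : 'I_n -> R :=
  fun i => \sum_(t : {ffun 'I_(k.-1) -> 'I_n}) P i t * \prod_(j < k.-1) y (t j).

Definition sumv (R : realType) (n : nat) (y : 'I_n -> R) : R := \sum_(i < n) y i.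

Definition norm1 (R : realType) (n : nat) (y : 'I_n -> R) : R := \sum_(i < n) `|y i|.

Definition col_substochastic (R : realType) (k n : nat) (P : tensor R k n) : Prop :=
  (forall i t, 0 <= P i t) /\ (forall t, \sum_(i < n) P i t <= 1).

Definition stochastic (R : realType) (n : nat) (v : 'I_n -> R) : Prop :=
  (forall i, 0 <= v i) /\ sumv v = 1.

Definition mlppr_sol (R : realType) (k n : nat) (alpha : R) (P : tensor R k n)
  (v y : 'I_n -> R) : Prop :=
  forall i, (sumv y) ^+ (k - 2) * y i - alpha * tapply P y i = v i.

Fixpoint tsa (R : realType) (k n : nat) (alpha : R) (P : tensor R k n)
  (v y0 : 'I_n -> R) (c : nat) : 'I_n -> R :=
  match c with
  | 0 => y0
  | c'.+1 =>
      let y := tsa alpha P v y0 c' in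
      let z := fun i => alpha * tapply P y i + v i in
      fun i => powR (sumv z) (- ((k - 2)%:R / (k - 1)%:R)) * z i
  end.

(* Main.v *)
Require Import Defs.
From HB Require Import structures.
From mathcomp Require Import all_boot all_order all_algebra.
From mathcomp Require Import all_classical all_reals all_analysis.
From mathcomp Require Import ring lra.
Import Order.TTheory GRing.Theory Num.Theory.
Import numFieldNormedType.Exports.
Local Open Scope ring_scope.
Local Open Scope classical_set_scope.

Section Lim.
Variable R : realType.

Lemma near_oo_ex (P : nat -> Prop) : (\forall c \near \oo, P c) -> exists N, forall c, (N <= c)%N -> P c.
Proof. case=> N _ h; exists N => c hc; exact: h. Qed.
Arguments near_oo_ex {P}.

Lemma geo_small (q C e : R) : 0 <= q -> q < 1 -> 0 < e ->
  exists N, forall c, (N <= c)%N -> C * q ^+ c < e.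
Proof.
move=> q0 q1 e0.
case: (leP C 0) => C0.
  exists 0%N => c _; apply: le_lt_trans e0.
  by rewrite mulr_le0_ge0 // exprn_ge0.
have hq : `|q| < 1 by rewrite ger0_norm.
have [N hN] := near_oo_ex (@cvgr_lt _ _ _ _ _ _ (cvg_expr hq) (e / C) (divr_gt0 e0 C0)).
exists N => c hc.
have := hN c hc => /= h.
by rewrite -(ltr_pM2l C0) [C * (e / C)]mulrC divfK ?gt_eqF in h.
Qed.

Lemma geo_le0 (q C x : R) : 0 <= q -> q < 1 -> (forall c, x <= C * q ^+ c) -> x <= 0.
Proof.
move=> q0 q1 h; rewrite leNgt; apply/negP => x0.
have [N hN] := @geo_small q C x q0 q1 x0.
by have := hN N (leqnn N); rewrite ltNge h.
Qed.

Lemma cauchy_lim (u : nat -> R) (q K : R) : 0 <= q -> q < 1 ->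
  (forall c d, (c <= d)%N -> `|u d - u c| <= K * q ^+ c) ->
  exists l, u @ \oo --> l /\ forall c, `|u c - l| <= K * q ^+ c.
Proof.
move=> q0 q1 hu.
have hc : cvg (u @ \oo).
  apply/cauchy_cvgP; apply/cauchy_exP => e e0.
  have [N hN] := @geo_small q K e q0 q1 e0.
  exists (u N).
  apply: filterS (nbhs_infty_ge N) => c hc /=.
  rewrite -ball_normE /=.
  rewrite distrC; apply: le_lt_trans (hu _ _ hc) _; exact: hN.
exists (lim (u @ \oo)); split => // c.
set l := lim _.
rewrite leNgt; apply/negP => hlt.
have hlt' : 0 < `|u c - l| - K * q ^+ c by rewrite subr_gt0.
have [N hN] := near_oo_ex ((proj1 (cvgrPdist_lt _ _) hc) _ hlt').
have h1 := hN (maxn N c) (leq_maxl _ _).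
have h2 := hu c (maxn N c) (leq_maxr _ _).
have h3 : `|u c - l| <= `|u (maxn N c) - u c| + `|l - u (maxn N c)|.
  have -> : u c - l = - ((u (maxn N c) - u c) + (l - u (maxn N c))) by ring.
  by rewrite normrN ler_normD.
lra.
Qed.

End Lim.

Section Comb.
Variable R : realType.
Variable n : nat.

Lemma sum_prod_ffun m (F : 'I_m -> 'I_n -> R) :
  \sum_(t : {ffun 'I_m -> 'I_n}) \prod_(j < m) F j (t j) = \prod_(j < m) \sum_(i < n) F j i.
Proof. by rewrite bigA_distr_bigA. Qed.

Lemma prod_diff m (x y : 'I_n -> R) B :
  (forall i, 0 <= x i) -> (forall i, 0 <= y i) -> sumv x <= B -> sumv y <= B ->
  \sum_(t : {ffun 'I_m -> 'I_n}) `|\prod_(j < m) y (t j) - \prod_(j < m) x (t j)|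
   <= m%:R * B ^+ m.-1 * norm1 (fun i => y i - x i).
Proof.
move=> hx hy hsx hsy.
have sx0 : 0 <= sumv x by rewrite /sumv sumr_ge0.
have B0 : 0 <= B by apply: le_trans hsx.
pose H (j : nat) (l : 'I_m) i := if (l < j)%N then y i else x i.
pose Q j (t : {ffun 'I_m -> 'I_n}) := \prod_(l < m) H j l (t l).
pose G (j : 'I_m) (l : 'I_m) i := if (l < j)%N then y i else if l == j then y i - x i else x i.
have eQ : forall t : {ffun 'I_m -> 'I_n}, \prod_(j < m) y (t j) - \prod_(j < m) x (t j) = \sum_(j < m) (Q j.+1 t - Q j t).
  move=> t; rewrite -(big_mkord xpredT (fun j => Q j.+1 t - Q j t)) telescope_sumr //.
  by congr (_ - _); apply: eq_bigr => l _; rewrite /H ?ltn_ord ?ltn0.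
have eG : forall (j : 'I_m) t, Q j.+1 t - Q j t = \prod_(l < m) G j l (t l).
  move=> j t; rewrite /Q (bigD1 j) //= [X in _ - X](bigD1 j) //= [X in _ = X](bigD1 j) //=.
  rewrite /H /G ltnSn ltnn eqxx.
  have E1 : \prod_(i < m | i != j) (if (i < j.+1)%N then y (t i) else x (t i)) =
            \prod_(i < m | i != j) (if (i < j)%N then y (t i) else x (t i)).
    by apply: eq_bigr => l /negPf lj; rewrite ltnS leq_eqVlt (inj_eq val_inj) lj.
  have E2 : \prod_(i < m | i != j) (if (i < j)%N then y (t i) else
                 if i == j then y (t i) - x (t i) else x (t i)) =
            \prod_(i < m | i != j) (if (i < j)%N then y (t i) else x (t i)).
    by apply: eq_bigr => l /negPf lj; rewrite lj.
  by rewrite E1 E2 mulrBl.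
have step : forall t : {ffun 'I_m -> 'I_n}, `|\prod_(j < m) y (t j) - \prod_(j < m) x (t j)|
    <= \sum_(j < m) \prod_(l < m) `|G j l (t l)|.
  move=> t; rewrite eQ; apply: le_trans (ler_norm_sum _ _ _) _.
  by apply: ler_sum => j _; rewrite eG normr_prod.
apply: le_trans (ler_sum _ (fun t _ => step t)) _.
rewrite exchange_big /=.
have -> : m%:R * B ^+ m.-1 * norm1 (fun i => y i - x i) =
  \sum_(j < m) (B ^+ m.-1 * norm1 (fun i => y i - x i)).
  by rewrite sumr_const card_ord -mulrA mulr_natl.
apply: ler_sum => j _; rewrite (sum_prod_ffun _ (fun l i => `|G j l i|)) (bigD1 j) //= mulrC.
apply: ler_pM.
- by apply: prodr_ge0 => l _; apply: sumr_ge0.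
- by apply: sumr_ge0.
- apply: (@le_trans _ _ (\prod_(l < m | l != j) B)); last first.
    by rewrite prodr_const cardC1 card_ord.
  apply: ler_prod => l lj; apply/andP; split.
    by apply: sumr_ge0.
  rewrite /G (negPf lj); case: (l < j)%N.
    by apply: le_trans hsy; apply: ler_sum => i _; rewrite ger0_norm ?hy.
  by apply: le_trans hsx; apply: ler_sum => i _; rewrite ger0_norm ?hx.
- by rewrite /G ltnn eqxx.
Qed.

End Comb.

Section Scalar.
Variable R : realType.

Lemma powRE' (s r : R) : 0 < s -> powR s r = expR (r * ln s).
Proof. by move=> s0; rewrite /powR gt_eqF. Qed.

Lemma ln_le_sub1 (x : R) : 0 < x -> ln x <= x - 1.
Proof.
move=> x0; have := expR_ge1Dx (ln x); rewrite lnK ?posrE // => h.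
by rewrite lerBrDl.
Qed.

Lemma scal_facts (a s1 s2 : R) : 0 <= a -> 1 <= s1 -> s1 <= s2 ->
  [/\ 0 <= powR s2 (-a), powR s2 (-a) <= powR s1 (-a), powR s1 (-a) <= 1 &
      (powR s1 (-a) - powR s2 (-a)) * s1 <= a * (s2 - s1)].
Proof.
move=> a0 h1 h12.
have s10 : 0 < s1 by apply: lt_le_trans h1.
have s20 : 0 < s2 by apply: lt_le_trans h12.
rewrite !powRE' //.
have l1 : 0 <= ln s1 by apply: ln_ge0.
have l12 : ln s1 <= ln s2 by rewrite ler_ln ?posrE.
have p1le : expR (- a * ln s1) <= 1 by rewrite expR_le1 mulNr oppr_le0 mulr_ge0.
pose u := a * (ln s2 - ln s1).
have u0 : 0 <= u by rewrite mulr_ge0 // subr_ge0.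
have e2 : expR (- a * ln s2) = expR (- a * ln s1) * expR (- u).
  by rewrite -expRD /u; congr expR; ring.
split.
- exact: expR_ge0.
- by rewrite ler_expR !mulNr lerN2 ler_wpM2l.
- exact: p1le.
have h1u : 1 - expR (- u) <= u by have := expR_ge1Dx (- u); lra.
have hA : expR (- a * ln s1) - expR (- a * ln s2) <= u.
  rewrite e2 -{1}(mulr1 (expR (- a * ln s1))) -mulrBr.
  apply: le_trans (ler_wpM2l (expR_ge0 _) h1u) _.
  by rewrite -{2}(mul1r u) ler_wpM2r.
apply: le_trans (ler_wpM2r (ltW s10) hA) _.
rewrite /u -mulrA ler_wpM2l //.
have := @ln_le_sub1 (s2 / s1) (divr_gt0 s20 s10); rewrite ln_div ?posrE // => h.
move: (ler_wpM2r (ltW s10) h) => H'; apply: le_trans H' _.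
by rewrite mulrBl divfK ?gt_eqF // mul1r.
Qed.

End Scalar.

Section Norm.
Variable R : realType.
Variable n : nat.
Implicit Types x y z : 'I_n -> R.

Lemma norm1_sym x y : norm1 (fun i => x i - y i) = norm1 (fun i => y i - x i).
Proof. by apply: eq_bigr => i _; rewrite distrC. Qed.

Lemma norm1_ge0 x : 0 <= norm1 x.
Proof. by apply: sumr_ge0. Qed.

Lemma sum_diff_le x y : sumv y - sumv x <= norm1 (fun i => x i - y i).
Proof.
rewrite /sumv -sumrB; apply: ler_sum => i _.
by rewrite distrC ler_norm.
Qed.

Lemma normalize_core (a : R) z1 z2 : 0 <= a -> (forall i, 0 <= z1 i) ->
  1 <= sumv z1 -> sumv z1 <= sumv z2 ->
  norm1 (fun i => powR (sumv z1) (-a) * z1 i - powR (sumv z2) (-a) * z2 i)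
   <= (1 + a) * norm1 (fun i => z1 i - z2 i).
Proof.
move=> a0 hz1 h1 h12.
have [p20 p21 p1 key] := @scal_facts _ _ _ _ a0 h1 h12.
set p1' := powR (sumv z1) (-a) in p21 p1 key *.
set p2' := powR (sumv z2) (-a) in p20 p21 key *.
apply: (@le_trans _ _ (\sum_(i < n) (p2' * `|z1 i - z2 i| + (p1' - p2') * z1 i))).
  apply: ler_sum => i _.
  have -> : p1' * z1 i - p2' * z2 i = p2' * (z1 i - z2 i) + (p1' - p2') * z1 i by ring.
  apply: le_trans (ler_normD _ _) _.
  rewrite !normrM (ger0_norm p20) (ger0_norm (hz1 i)) (@ger0_norm _ (p1' - p2')) //.
  by rewrite subr_ge0.
rewrite big_split /= -mulr_sumr -mulr_sumr.
change (\sum_(i < n) `|z1 i - z2 i|) with (norm1 (fun i => z1 i - z2 i)).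
have hs := sum_diff_le z1 z2.
have N0 := norm1_ge0 (fun i => z1 i - z2 i).
move: hs key N0; rewrite /sumv.
set N := norm1 _; set S1 := \sum_(i < n) z1 i; set S2 := \sum_(i < n) z2 i.
move=> hs key N0.
have hN : p2' * N <= N by rewrite -{2}(mul1r N) ler_wpM2r // (le_trans p21 p1).
have : a * (S2 - S1) <= a * N by rewrite ler_wpM2l.
lra.
Qed.

Lemma normalize (a : R) z1 z2 : 0 <= a -> (forall i, 0 <= z1 i) -> (forall i, 0 <= z2 i) ->
  1 <= sumv z1 -> 1 <= sumv z2 ->
  norm1 (fun i => powR (sumv z1) (-a) * z1 i - powR (sumv z2) (-a) * z2 i)
   <= (1 + a) * norm1 (fun i => z1 i - z2 i).
Proof.
move=> a0 hz1 hz2 h1 h2.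
case: (leP (sumv z1) (sumv z2)) => h.
  exact: normalize_core.
rewrite (norm1_sym (fun i => powR (sumv z1) (-a) * z1 i) (fun i => powR (sumv z2) (-a) * z2 i)).
rewrite (norm1_sym z1 z2).
by apply: normalize_core => //; apply: ltW.
Qed.

Lemma norm1_tri x y z : norm1 (fun i => x i - z i) <=
  norm1 (fun i => x i - y i) + norm1 (fun i => y i - z i).
Proof.
rewrite /norm1 -big_split /=; apply: ler_sum => i _.
have -> : x i - z i = (x i - y i) + (y i - z i) by ring.
exact: ler_normD.
Qed.

Lemma coord_le x y i : `|x i - y i| <= norm1 (fun i => x i - y i).
Proof.
rewrite /norm1 (bigD1 i) //= lerDl; apply: sumr_ge0 => j _; exact: normr_ge0.
Qed.

End Norm.

Section Tensor.
Variable R : realType.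
Variables k n : nat.
Variable P : tensor R k n.
Hypothesis hP : col_substochastic P.

Lemma tapply_ge0 y : (forall i, 0 <= y i) -> forall i, 0 <= tapply P y i.
Proof.
move=> hy i; apply: sumr_ge0 => t _; apply: mulr_ge0; first by case: hP.
by apply: prodr_ge0 => j _.
Qed.

Lemma sum_tapply y : (forall i, 0 <= y i) -> sumv (tapply P y) <= sumv y ^+ k.-1.
Proof.
move=> hy; rewrite /sumv /tapply exchange_big /=.
have -> : (\sum_(i < n) y i) ^+ k.-1 = \prod_(j < k.-1) \sum_(i < n) y i.
  by rewrite prodr_const card_ord.
rewrite -(@sum_prod_ffun _ _ _ (fun _ i => y i)).
apply: ler_sum => t _; rewrite -mulr_suml -{2}(mul1r (\prod_(j < k.-1) y (t j))).
apply: ler_wpM2r; first by apply: prodr_ge0 => j _.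
by case: hP => _; apply.
Qed.

Lemma norm_tapply x y : norm1 (fun i => tapply P y i - tapply P x i) <=
  \sum_(t : {ffun 'I_(k.-1) -> 'I_n}) `|\prod_(j < k.-1) y (t j) - \prod_(j < k.-1) x (t j)|.
Proof.
rewrite /norm1 /tapply.
apply: (@le_trans _ _ (\sum_(i < n) \sum_(t : {ffun 'I_(k.-1) -> 'I_n})
   P i t * `|\prod_(j < k.-1) y (t j) - \prod_(j < k.-1) x (t j)|)).
  apply: ler_sum => i _; rewrite -sumrB.
  apply: le_trans (ler_norm_sum _ _ _) _; apply: ler_sum => t _.
  by rewrite -mulrBr normrM ger0_norm //; case: hP.
rewrite exchange_big /=; apply: ler_sum => t _; rewrite -mulr_suml.
rewrite -{2}(mul1r `|_ - _|); apply: ler_wpM2r => //.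
by case: hP => _; apply.
Qed.

End Tensor.

Section Main.
Variable R : realType.
Variables m n : nat.
Variable P : tensor R m.+2 n.
Variable v : 'I_n -> R.
Variable alpha : R.
Hypothesis hP : col_substochastic P.
Hypothesis hv : stochastic v.
Hypothesis ha0 : 0 <= alpha.
Hypothesis ha1 : alpha < 1.

Definition zm (y : 'I_n -> R) := fun i => alpha * tapply P y i + v i.
Definition aa : R := (m.+2 - 2)%:R / (m.+2 - 1)%:R.
Definition Tm (y : 'I_n -> R) :=
  fun i => powR (sumv (zm y)) (- ((m.+2 - 2)%:R / (m.+2 - 1)%:R)) * zm y i.
Definition BB : R := powR (1 - alpha) (- (1 / (m.+2 - 1)%:R)).
Definition DD (y : 'I_n -> R) := (forall i, 0 <= y i) /\ sumv y <= BB.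

Lemma Sm_neq0 : 1 + m%:R != 0 :> R.
Proof. by rewrite addrC natr1 pnatr_eq0. Qed.

Lemma aaE : aa = m%:R / m.+1%:R.
Proof. by rewrite /aa !subSS !subn0. Qed.

Lemma M1E : (m.+2 - 1)%:R = m.+1%:R :> R.
Proof. by rewrite subSS subn0. Qed.

Lemma ln1a_def : 0 < 1 - alpha.
Proof. by rewrite subr_gt0. Qed.

Lemma BBE : BB = expR (- (1 / m.+1%:R) * ln (1 - alpha)).
Proof. by rewrite /BB powRE' ?M1E // ln1a_def. Qed.

Lemma BB_ge0 : 0 <= BB.
Proof. by rewrite BBE expR_ge0. Qed.

Lemma BB_pow : BB ^+ m.+1 = (1 - alpha)^-1.
Proof.
rewrite BBE -expRM_natl.
have -> : m.+1%:R * (- (1 / m.+1%:R) * ln (1 - alpha)) = - ln (1 - alpha) :> R.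
  by field; exact: Sm_neq0.
by rewrite expRN lnK // posrE ln1a_def.
Qed.

Lemma BB_powm : BB ^+ m = powR (1 - alpha) (- aa).
Proof.
rewrite BBE -expRM_natl powRE' ?ln1a_def // aaE; congr expR.
by field; exact: Sm_neq0.
Qed.

Lemma zm_props y : DD y ->
  [/\ forall i, 0 <= zm y i, 1 <= sumv (zm y) & sumv (zm y) <= (1 - alpha)^-1].
Proof.
case=> hy hs.
have hv0 := hv.1.
have t0 := @tapply_ge0 _ _ _ _ hP _ hy.
have S0 : 0 <= sumv (tapply P y) by apply: sumr_ge0.
have eS : sumv (zm y) = alpha * sumv (tapply P y) + 1.
  by rewrite /sumv /zm big_split /= -mulr_sumr; case: hv => _ <-.
split.
- by move=> i; rewrite /zm addr_ge0 // mulr_ge0.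
- by rewrite eS lerDr mulr_ge0.
rewrite eS.
have h1 : sumv (tapply P y) <= (1 - alpha)^-1.
  apply: le_trans (@sum_tapply _ _ _ _ hP _ hy) _; rewrite -BB_pow.
  by rewrite lerXn2r // ?nnegrE ?BB_ge0 //; apply: sumr_ge0.
have := ler_wpM2l ha0 h1.
have : (1 - alpha)^-1 = alpha * (1 - alpha)^-1 + 1.
  by field; rewrite subr_eq0 gt_eqF.
lra.
Qed.


Lemma TmE y i : Tm y i = powR (sumv (zm y)) (- aa) * zm y i.
Proof. by []. Qed.

Lemma aa_ge0 : 0 <= aa.
Proof. by rewrite aaE divr_ge0. Qed.

Lemma Tm_sum y : DD y -> sumv (Tm y) = expR ((1 / m.+1%:R) * ln (sumv (zm y))).
Proof.
move=> hD; have [_ s1 _] := zm_props _ hD.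
have s0 : 0 < sumv (zm y) by apply: lt_le_trans s1.
rewrite /sumv; under eq_bigr do rewrite TmE.
rewrite -mulr_sumr -/(sumv (zm y)) powRE' //.
rewrite -{2}(lnK (x := sumv (zm y))) ?posrE // -expRD aaE; congr expR.
by field; exact: Sm_neq0.
Qed.

Lemma Tm_D y : DD y -> DD (Tm y).
Proof.
move=> hD; have [z0 s1 s2] := zm_props _ hD.
have s0 : 0 < sumv (zm y) by apply: lt_le_trans s1.
split.
  by move=> i; rewrite TmE mulr_ge0 // powR_ge0.
rewrite Tm_sum // BBE ler_expR mulNr -mulrN ler_wpM2l ?divr_ge0 //.
rewrite -lnV ?posrE ?ln1a_def // ler_ln ?posrE ?invr_gt0 ?ln1a_def //.
Qed.

Lemma twok3 : (2 * m.+2 - 3)%:R = (1 + aa) * m.+1%:R :> R.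
Proof.
have -> : (2 * m.+2 - 3 = m + m.+1)%N.
  by rewrite !mulSn mul0n addn0 !addSn !addnS !subSS subn0.
rewrite aaE natrD; field; exact: Sm_neq0.
Qed.

Lemma contraction x y : DD x -> DD y ->
  norm1 (fun i => Tm y i - Tm x i) <=
  (2 * m.+2 - 3)%:R * alpha * powR (1 - alpha) (- ((m.+2 - 2)%:R / (m.+2 - 1)%:R))
   * norm1 (fun i => y i - x i).
Proof.
move=> hx hy.
have [zx0 sx1 _] := zm_props _ hx.
have [zy0 sy1 _] := zm_props _ hy.
have st1 := @normalize _ _ aa (zm y) (zm x) aa_ge0 zy0 zx0 sy1 sx1.
have e2 : norm1 (fun i => zm y i - zm x i) = alpha * norm1 (fun i => tapply P y i - tapply P x i).
  rewrite /norm1 mulr_sumr; apply: eq_bigr => i _.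
  rewrite -(ger0_norm ha0) -normrM /zm; congr `|_|; ring.
have st3 := @norm_tapply _ _ _ _ hP x y.
case: hx => hx0 hxs; case: hy => hy0 hys.
have st4 := @prod_diff _ _ m.+1 x y BB hx0 hy0 hxs hys.
rewrite -/aa twok3 -BB_powm.
apply: le_trans st1 _.
rewrite e2.
have N0 := @norm1_ge0 _ _ (fun i => y i - x i).
have : norm1 (fun i => tapply P y i - tapply P x i) <= m.+1%:R * BB ^+ m * norm1 (fun i => y i - x i).
  exact: le_trans st3 st4.
move=> H; rewrite -!mulrA ler_wpM2l ?addr_ge0 ?aa_ge0 //.
rewrite [m.+1%:R * _]mulrC -!mulrA ler_wpM2l //.
by rewrite mulrA mulrC mulrA.
Qed.

Lemma fixed_mlppr y : DD y -> (forall i, Tm y i = y i) -> mlppr_sol alpha P v y.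
Proof.
move=> hD hfix i.
have [_ s1 _] := zm_props _ hD.
have s0 : 0 < sumv (zm y) by apply: lt_le_trans s1.
have hs : sumv y = expR ((1 / m.+1%:R) * ln (sumv (zm y))).
  rewrite -Tm_sum //; apply: eq_bigr => j _; exact/esym/hfix.
have -> : (m.+2 - 2)%N = m by rewrite !subSS subn0.
rewrite -hfix TmE hs -expRM_natl powRE' // mulrA -expRD.
have -> : m%:R * (1 / m.+1%:R * ln (sumv (zm y))) + - aa * ln (sumv (zm y)) = 0.
  by rewrite aaE; field; exact: Sm_neq0.
by rewrite expR0 mul1r /zm addrC addKr.
Qed.

End Main.


Lemma geo_sum_le (R : realType) (q : R) j : 0 <= q -> q < 1 ->
  \sum_(l < j) q ^+ l <= (1 - q)^-1.
Proof.
move=> q0 q1; elim: j => [|j IH].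
  by rewrite big_ord0 invr_ge0 subr_ge0 ltW.
rewrite big_ord_recl expr0.
under eq_bigr do rewrite /bump /= exprS.
rewrite -mulr_sumr.
have h := ler_wpM2l q0 IH.
have E : 1 + q * (1 - q)^-1 = (1 - q)^-1 by field; rewrite subr_eq0 gt_eqF.
by rewrite -E lerD2l.
Qed.

Theorem theorem4p2 (R : realType) (k n : nat) (hk : (2 <= k)%N) (hn : (1 <= n)%N)
  (P : tensor R k n) (v : 'I_n -> R) (alpha : R)
  (hP : col_substochastic P) (hv : stochastic v)
  (ha0 : 0 <= alpha) (ha1 : alpha < 1)
  (hvs : (2 * k - 3)%:R * alpha
           * powR (1 - alpha) (- ((k - 2)%:R / (k - 1)%:R)) < 1)
  (y0 : 'I_n -> R) (hy0 : forall i, 0 <= y0 i)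
  (hy0s : sumv y0 <= powR (1 - alpha) (- (1 / (k - 1)%:R))) :
  let vs := (2 * k - 3)%:R * alpha * powR (1 - alpha) (- ((k - 2)%:R / (k - 1)%:R)) in
  exists ys : 'I_n -> R,
    (forall i, 0 <= ys i) /\ mlppr_sol alpha P v ys /\
    (forall i, tsa alpha P v y0 c i @[c --> \oo] --> ys i) /\
    (forall c : nat, norm1 (fun i => tsa alpha P v y0 c i - ys i)
                     <= vs ^+ c * norm1 (fun i => y0 i - ys i)).
Proof.
move: hk P hP hvs hy0s; case: k => [|[|m]] // hk P hP hvs hy0s vs.
pose T := Tm R m n P v alpha.
pose D := DD R m n alpha.
have hq0 : 0 <= vs by rewrite /vs mulr_ge0 ?powR_ge0 // mulr_ge0.
have hq1 : vs < 1 := hvs.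
pose y := tsa alpha P v y0.
have yS : forall c, y c.+1 = T (y c) by [].
have yD : forall c, D (y c).
  elim => [|c IH]; first by split.
  rewrite yS; exact: (@Tm_D R m n P v alpha hP hv ha0 ha1 _ IH).
have contr : forall x z, D x -> D z ->
    norm1 (fun i => T z i - T x i) <= vs * norm1 (fun i => z i - x i).
  move=> x z hx hz; rewrite /vs; exact: (@contraction R m n P v alpha hP hv ha0 ha1 x z hx hz).
pose K0 := norm1 (fun i => y 1%N i - y 0%N i).
have K00 : 0 <= K0 by apply: norm1_ge0.
have step : forall c, norm1 (fun i => y c.+1 i - y c i) <= K0 * vs ^+ c.
  elim => [|c IH]; first by rewrite expr0 mulr1.
  apply: le_trans (contr _ _ (yD c) (yD c.+1)) _.
  by rewrite exprS mulrCA ler_wpM2l.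
have far : forall c j, norm1 (fun i => y (c + j)%N i - y c i) <=
    K0 * vs ^+ c * \sum_(l < j) vs ^+ l.
  move=> c; elim => [|j IH].
    rewrite addn0 big_ord0 mulr0 /norm1 big1 // => i _.
    by rewrite subrr normr0.
  apply: le_trans (@norm1_tri _ _ _ (y (c + j)%N) _) _.
  rewrite addnS big_ord_recr /= mulrDr addrC; apply: lerD => //.
  by apply: le_trans (step _) _; rewrite exprD mulrA.
pose K := K0 * (1 - vs)^-1.
have cau : forall i c d, (c <= d)%N -> `|y d i - y c i| <= K * vs ^+ c.
  move=> i c d /subnKC <-.
  apply: le_trans (@coord_le _ _ _ _ i) _; apply: le_trans (far _ _) _.
  rewrite /K mulrAC ler_wpM2r ?exprn_ge0 // ler_wpM2l //.
  exact: geo_sum_le.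
have hex : forall i, exists l, (fun c => y c i) @ \oo --> l /\
    forall c, `|y c i - l| <= K * vs ^+ c.
  move=> i; exact: (@cauchy_lim _ (fun c => y c i) vs K hq0 hq1 (cau i)).
have [ys hys] := fin_all_exists hex.
have nb : forall c, norm1 (fun i => y c i - ys i) <= n%:R * K * vs ^+ c.
  move=> c; apply: le_trans (ler_sum _ (fun i _ => (hys i).2 c)) _.
  by rewrite sumr_const card_ord -mulrA mulr_natl.
have ysD : D ys.
  split.
    move=> i; rewrite -oppr_le0; apply: (@geo_le0 _ vs K) => // c.
    apply: le_trans ((hys i).2 c); apply: le_trans (ler_norm _).
    by rewrite lerBrDl subrr; case: (yD c) => h _; apply: h.
  rewrite -subr_le0; apply: (@geo_le0 _ vs (n%:R * K)) => // c.
  apply: le_trans (nb c); apply: le_trans (@sum_diff_le _ _ (y c) ys).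
  by rewrite lerD2l lerN2; case: (yD c).
have fixT : forall i, T ys i = ys i.
  move=> i; apply/eqP; rewrite -subr_eq0 -normr_le0.
  apply: (@geo_le0 _ vs (vs * (n%:R * K) + K * vs)) => // c.
  have h1 : `|T ys i - ys i| <= `|T ys i - y c.+1 i| + `|y c.+1 i - ys i|.
    have -> : T ys i - ys i = (T ys i - y c.+1 i) + (y c.+1 i - ys i) by ring.
    exact: ler_normD.
  apply: le_trans h1 _; rewrite mulrDl; apply: lerD.
    apply: le_trans (@coord_le _ _ _ _ i) _.
    apply: le_trans (contr _ _ (yD c) ysD) _.
    by rewrite norm1_sym -mulrA ler_wpM2l.
  by apply: le_trans ((hys i).2 c.+1) _; rewrite exprS mulrA.
exists ys; split; first by case: ysD.
split; first exact: (@fixed_mlppr R m n P v alpha hP hv ha0 ha1 ys ysD fixT).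
split; first by move=> i; exact: (hys i).1.
elim => [|c IH]; first by rewrite expr0 mul1r.
have -> : norm1 (fun i => tsa alpha P v y0 c.+1 i - ys i) =
          norm1 (fun i => T (y c) i - T ys i).
  by apply: eq_bigr => i _; rewrite fixT.
apply: le_trans (contr _ _ ysD (yD c)) _.
by rewrite exprS -mulrA ler_wpM2l.
Qed.
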